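(* Let $K$ be a field of characteristic $0$ and let $(A_i,\omega_i)$, $i=1,2$, be baric $K$-algebras of countable dimension, with $\nu_i=\dim_K A_i$. Then $A_1\bowtie A_2$ is associative if and only if $(A_i,\omega_i)\cong(K^{\bowtie\nu_i},\operatorname{id}_K^{\bowtie\nu_i})$ for $i=1,2$. In that case $(A_1\bowtie A_2,\omega_1\bowtie\omega_2)\cong(K^{\bowtie\nu},\operatorname{id}_K^{\bowtie\nu})$ with $\nu=\nu_1+\nu_2$.
   Context: A baric algebra over a field $K$ is a pair $(A,\omega)$ where $A$ is a (not necessarily associative) $K$-algebra and $\omega:A\to K$ is a nonzero $K$-algebra homomorphism; two baric algebras $(A,\omega),(B,\varphi)$ are isomorphic if there is an algebra isomorphism $f:A\to B$ with $\varphi\circ f=\omega$. For baric algebras $(A_1,\omega_1),(A_2,\omega_2)$, $A_1\bowtie A_2$ is the vector space $A_1\oplus A_2$ with product $(a_1,a_2)(b_1,b_2)=(a_1b_1+\omega_2(b_2)a_1,\ a_2b_2+\omega_1(b_1)a_2)$ and weight $\omega_1\bowtie\omega_2(a_1,a_2)=\omega_1(a_1)+\omega_2(a_2)$. For a cardinal $1\le\nu\le\aleph_0$, $K^{\bowtie\nu}$ is the $K$-vector space of finitely supported families $(\alpha_i)_{i<\nu}$ in $K$ with product $(\alpha_i)(\beta_i)=\big(\sum_i\beta_i\big)(\alpha_i)$ and weight $\operatorname{id}_K^{\bowtie\nu}((\alpha_i))=\sum_i\alpha_i$ (for finite $\nu$ this is the iterated $\bowtie$-construction of $\nu$ copies of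 $(K,\operatorname{id}_K)$). *)

(* Defs.v *)
From HB Require Import structures.
From mathcomp Require Import all_boot all_order all_algebra.
Set Implicit Arguments. Unset Strict Implicit. Unset Printing Implicit Defensive.
Import Order.TTheory GRing.Theory Num.Theory.
Local Open Scope ring_scope.

(* Cardinals 1 <= nu <= aleph_0 (Fin 0 is allowed syntactically but is
   excluded in the theorem by the nonzero weight). *)
Inductive cnum := Fin of nat | Aleph0.

Definition cadd (a b : cnum) : cnum :=
  match a, b with Fin m, Fin n => Fin (m + n)%N | _, _ => Aleph0 end.

Definition in_idx (nu : cnum) (i : nat) : bool :=
  match nu with Fin n => (i < n)%N | Aleph0 => true end.

Definition bilinear_mul (K : fieldType) (A : lmodType K) (mul : A -> A -> A) :=
  (forall (k : K) (a b c : A), mul (k *: a + b) c = k *: mul a c + mul b c) /\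
  (forall (k : K) (a b c : A), mul c (k *: a + b) = k *: mul c a + mul c b).

Definition is_weight (K : fieldType) (A : lmodType K) (mul : A -> A -> A)
    (omega : A -> K) :=
  [/\ forall (k : K) (a b : A), omega (k *: a + b) = k * omega a + omega b,
      forall a b : A, omega (mul a b) = omega a * omega b
    & exists a : A, omega a != 0].

Definition associative_mul (T : Type) (mul : T -> T -> T) :=
  forall a b c : T, mul (mul a b) c = mul a (mul b c).

Definition has_dim (K : fieldType) (A : lmodType K) (nu : cnum) :=
  exists e : nat -> A,
    (forall a : A, exists (N : nat) (c : nat -> K),
        a = \sum_(i < N | in_idx nu i) c i *: e i) /\
    (forall (N : nat) (c : nat -> K),
        \sum_(i < N | in_idx nu i) c i *: e i = 0 ->
        forall i : nat, (i < N)%N -> in_idx nu i -> c i = 0).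

Definition baric_iso (K : fieldType) (A B : lmodType K)
    (mulA : A -> A -> A) (wA : A -> K) (mulB : B -> B -> B) (wB : B -> K) :=
  exists f : A -> B,
    [/\ bijective f,
        forall (k : K) (a b : A), f (k *: a + b) = k *: f a + f b,
        forall a b : A, f (mulA a b) = mulB (f a) (f b)
      & forall a : A, wB (f a) = wA a].

Definition bow_mul (K : fieldType) (A1 A2 : lmodType K)
    (mul1 : A1 -> A1 -> A1) (w1 : A1 -> K)
    (mul2 : A2 -> A2 -> A2) (w2 : A2 -> K) (x y : A1 * A2) : A1 * A2 :=
  (mul1 x.1 y.1 + w2 y.2 *: x.1, mul2 x.2 y.2 + w1 y.1 *: x.2).

Definition bow_weight (K : fieldType) (A1 A2 : lmodType K)
    (w1 : A1 -> K) (w2 : A2 -> K) (x : A1 * A2) : K := w1 x.1 + w2 x.2.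

(* K^{bowtie nu}: finitely supported families (alpha_i)_{i<nu}.
   For finite nu = n these are row vectors 'rV_n; for nu = aleph_0 they are
   coefficient sequences of polynomials (finitely supported families indexed
   by nat). *)
Definition Kbow (K : fieldType) (nu : cnum) : lmodType K :=
  match nu with Fin n => 'rV[K]_n | Aleph0 => {poly K} end.

Definition Kweight (K : fieldType) (nu : cnum) : Kbow K nu -> K :=
  match nu as nu0 return Kbow K nu0 -> K with
  | Fin n => fun v : 'rV[K]_n => \sum_(i < n) v ord0 i
  | Aleph0 => fun p : {poly K} => \sum_(i < size p) p`_i
  end.

Definition Kmul (K : fieldType) (nu : cnum) (x y : Kbow K nu) : Kbow K nu :=
  Kweight y *: x.

(* Main.v *)
Require Import Defs.
From HB Require Import structures.
From mathcomp Require Import all_boot all_order all_algebra.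
From mathcomp Require Import zify.
Set Implicit Arguments. Unset Strict Implicit. Unset Printing Implicit Defensive.
Import Order.TTheory GRing.Theory Num.Theory.
Local Open Scope ring_scope.


Definition linf (K : fieldType) (U V : lmodType K) (f : U -> V) :=
  forall (k : K) (a b : U), f (k *: a + b) = k *: f a + f b.
Definition linw (K : fieldType) (U : lmodType K) (f : U -> K) :=
  forall (k : K) (a b : U), f (k *: a + b) = k * f a + f b.

Section Lin.
Variable K : fieldType.

Lemma linw0 (U : lmodType K) (f : U -> K) : linw f -> f 0 = 0.
Proof. move=> h; have := h (-1) 0 0; rewrite scaleN1r oppr0 addr0 mulN1r.
by rewrite addNr. Qed.
Lemma linwZ (U : lmodType K) (f : U -> K) k a : linw f -> f (k *: a) = k * f a.
Proof. move=> h; have := h k a 0; rewrite addr0 (linw0 h) addr0 //. Qed.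
Lemma linwD (U : lmodType K) (f : U -> K) a b : linw f -> f (a + b) = f a + f b.
Proof. move=> h; have := h 1 a b; rewrite scale1r mul1r //. Qed.

Lemma linf0 (U V : lmodType K) (f : U -> V) : linf f -> f 0 = 0.
Proof. move=> h; have := h (-1) 0 0; rewrite scaleN1r oppr0 addr0 scaleN1r.
by rewrite addNr. Qed.
Lemma linfZ (U V : lmodType K) (f : U -> V) k a : linf f -> f (k *: a) = k *: f a.
Proof. move=> h; have := h k a 0; rewrite addr0 (linf0 h) addr0 //. Qed.
Lemma linfD (U V : lmodType K) (f : U -> V) a b : linf f -> f (a + b) = f a + f b.
Proof. move=> h; have := h 1 a b; rewrite !scale1r //. Qed.
Lemma linfB (U V : lmodType K) (f : U -> V) a b : linf f -> f (a - b) = f a - f b.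
Proof. move=> h; rewrite -scaleN1r linfD // linfZ // scaleN1r //. Qed.

Lemma mul0_l (A : lmodType K) (mul : A -> A -> A) c : bilinear_mul mul -> mul 0 c = 0.
Proof. case=> h _; have := h (-1) 0 0 c; rewrite scaleN1r oppr0 addr0 scaleN1r.
by rewrite addNr. Qed.
Lemma mul0_r (A : lmodType K) (mul : A -> A -> A) c : bilinear_mul mul -> mul c 0 = 0.
Proof. case=> _ h; have := h (-1) 0 0 c; rewrite scaleN1r oppr0 addr0 scaleN1r.
by rewrite addNr. Qed.

Lemma scale_fst (A B : lmodType K) (k : K) (x : A * B) : (k *: x).1 = k *: x.1.
Proof. by []. Qed.
Lemma scale_snd (A B : lmodType K) (k : K) (x : A * B) : (k *: x).2 = k *: x.2.
Proof. by []. Qed.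
Lemma add_fst (A B : lmodType K) (x y : A * B) : (x + y).1 = x.1 + y.1.
Proof. by []. Qed.
Lemma add_snd (A B : lmodType K) (x y : A * B) : (x + y).2 = x.2 + y.2.
Proof. by []. Qed.

Lemma sum_fst (A B : lmodType K) (r : seq nat) (F : nat -> A * B) :
  (\sum_(i <- r) F i).1 = \sum_(i <- r) (F i).1.
Proof. elim: r => [|x r IH]; rewrite ?big_nil ?big_cons //= IH //. Qed.
Lemma sum_snd (A B : lmodType K) (r : seq nat) (F : nat -> A * B) :
  (\sum_(i <- r) F i).2 = \sum_(i <- r) (F i).2.
Proof. elim: r => [|x r IH]; rewrite ?big_nil ?big_cons //= IH //. Qed.

Lemma sum_iota_mem (V : zmodType) (s : seq nat) M (F : nat -> V) :
  uniq s -> (forall i, i \in s -> (i < M)%N) ->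
  \sum_(i <- iota 0 M) (if i \in s then F i else 0) = \sum_(i <- s) F i.
Proof.
move=> us hs; rewrite -big_mkcond -big_filter; apply: perm_big.
apply: uniq_perm; rewrite ?filter_uniq ?iota_uniq // => i.
rewrite mem_filter mem_iota /= add0n; case E: (i \in s) => //=; exact: hs.
Qed.
End Lin.


Definition lbasis (K : fieldType) (A : lmodType K) (e : nat -> A) (P : pred nat) :=
  (forall a : A, exists (s : seq nat) (c : nat -> K),
      [/\ uniq s, all P s & a = \sum_(i <- s) c i *: e i]) /\
  (forall (s : seq nat) (c : nat -> K), uniq s -> all P s ->
      \sum_(i <- s) c i *: e i = 0 -> forall i, i \in s -> c i = 0).

Section LB.
Variable K : fieldType.

Lemma has_dim_lbasis (A : lmodType K) nu : has_dim A nu ->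
  exists e : nat -> A, lbasis e (in_idx nu).
Proof.
case=> e [hs hi]; exists e; split.
  move=> a; have [N [c ->]] := hs a.
  exists (filter (in_idx nu) (iota 0 N)), c; split.
  - by rewrite filter_uniq ?iota_uniq.
  - by rewrite filter_all.
  - by rewrite big_filter -(big_mkord (in_idx nu) (fun i => c i *: e i)) /index_iota subn0.
move=> s c us as0 h0 i is0.
set N := (\max_(j <- s) j).+1.
have hN : forall j, j \in s -> (j < N)%N.
  by move=> j js; rewrite ltnS (@leq_bigmax_seq _ s xpredT (fun j => j) j js).
have := hi N (fun j => if j \in s then c j else 0).
rewrite -(big_mkord (in_idx nu) (fun i => (if i \in s then c i else 0) *: e i)).
have -> : \sum_(0 <= i0 < N | in_idx nu i0)
   (if i0 \in s then c i0 else 0) *: e i0 = \sum_(i <- s) c i *: e i.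
  rewrite big_mkcond /= -(@sum_iota_mem _ _ _ (fun j => c j *: e j) us hN); apply: eq_bigr => j _.
  case js: (j \in s); last by rewrite /= scale0r if_same.
  by rewrite (allP as0 j js).
move=> /(_ h0 i (hN i is0)); rewrite is0 (allP as0 i is0); exact.
Qed.

Definition ibas (A1 A2 : lmodType K) (e1 : nat -> A1) (e2 : nat -> A2) (k : nat)
  : A1 * A2 := if odd k then (0, e2 k./2) else (e1 k./2, 0).
Definition ipred (P1 P2 : pred nat) : pred nat :=
  fun k => if odd k then P2 k./2 else P1 k./2.

Lemma oddD2 i : odd i.*2 = false. Proof. lia. Qed.
Lemma oddD21 i : odd i.*2.+1 = true. Proof. lia. Qed.
Lemma halfD21 i : (i.*2.+1)./2 = i. Proof. lia. Qed.
Lemma ibas_even (A1 A2 : lmodType K) (e1 : nat -> A1) (e2 : nat -> A2) i :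
  ibas e1 e2 i.*2 = (e1 i, 0).
Proof. by rewrite /ibas oddD2 doubleK. Qed.
Lemma ibas_odd (A1 A2 : lmodType K) (e1 : nat -> A1) (e2 : nat -> A2) i :
  ibas e1 e2 i.*2.+1 = (0, e2 i).
Proof. by rewrite /ibas oddD21 halfD21. Qed.

Lemma lbasis_prod (A1 A2 : lmodType K) e1 e2 P1 P2 :
  @lbasis K A1 e1 P1 -> @lbasis K A2 e2 P2 ->
  lbasis (ibas e1 e2) (ipred P1 P2).
Proof.
move=> [hs1 hi1] [hs2 hi2]; split.
  move=> [a1 a2].
  have [s1 [c1 [u1 al1 ->]]] := hs1 a1.
  have [s2 [c2 [u2 al2 ->]]] := hs2 a2.
  exists (map double s1 ++ map (fun i => i.*2.+1) s2).
  exists (fun k => if odd k then c2 k./2 else c1 k./2); split.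
  - rewrite cat_uniq map_inj_uniq ?u1 /=; last exact: double_inj.
    rewrite map_inj_uniq ?u2 ?andbT; last by move=> x y [] /double_inj.
    apply/hasPn => x /mapP [j _ ->]; apply/mapP => [[i _]]; lia.
  - rewrite all_cat; apply/andP; split; apply/allP => x /mapP [j js ->];
    rewrite /ipred.
      have -> : odd j.*2 = false by lia.
      by rewrite doubleK (allP al1).
    have -> : odd j.*2.+1 = true by lia.
    have -> : (j.*2.+1)./2 = j by lia.
    by rewrite (allP al2).
  rewrite big_cat !big_map; apply/eqP; rewrite xpair_eqE; apply/andP; split;
    apply/eqP; rewrite ?add_fst ?add_snd ?sum_fst ?sum_snd.
    rewrite [X in _ = _ + X]big1 ?addr0; last first.
      by move=> i _; rewrite ibas_odd scale_fst; exact: scaler0.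
    by apply: eq_bigr => i _; rewrite ibas_even oddD2 doubleK.
  rewrite [X in _ = X + _]big1 ?add0r; last first.
    by move=> i _; rewrite ibas_even scale_snd; exact: scaler0.
  by apply: eq_bigr => i _; rewrite ibas_odd oddD21 halfD21.
move=> s c us as0 h0.
have h1 : \sum_(i <- s) (c i *: ibas e1 e2 i).1 = 0 by rewrite -sum_fst h0.
have h2 : \sum_(i <- s) (c i *: ibas e1 e2 i).2 = 0 by rewrite -sum_snd h0.
have E1 : \sum_(i <- s) (c i *: ibas e1 e2 i).1 =
  \sum_(j <- map half (filter (fun k => ~~ odd k) s)) c j.*2 *: e1 j.
  rewrite big_map big_filter [RHS]big_mkcond; apply: eq_bigr => i _.
  rewrite scale_fst /ibas; case oi: (odd i) => /=; first exact: scaler0.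
  by have -> : (i./2).*2 = i by lia.
have E2 : \sum_(i <- s) (c i *: ibas e1 e2 i).2 =
  \sum_(j <- map half (filter (fun k => odd k) s)) c j.*2.+1 *: e2 j.
  rewrite big_map big_filter [RHS]big_mkcond; apply: eq_bigr => i _.
  rewrite scale_snd /ibas; case oi: (odd i) => /=; last exact: scaler0.
  by have -> : (i./2).*2.+1 = i by lia.
have U1 : uniq (map half (filter (fun k => ~~ odd k) s)).
  rewrite map_inj_in_uniq ?filter_uniq // => x y.
  rewrite !mem_filter => /andP [ox _] /andP [oy _]; lia.
have U2 : uniq (map half (filter (fun k => odd k) s)).
  rewrite map_inj_in_uniq ?filter_uniq // => x y.
  rewrite !mem_filter => /andP [ox _] /andP [oy _]; lia.
have A1' : all P1 (map half (filter (fun k => ~~ odd k) s)).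
  apply/allP => x /mapP [k]; rewrite mem_filter => /andP [ok ks] ->.
  by have := allP as0 k ks; rewrite /ipred (negbTE ok).
have A2' : all P2 (map half (filter (fun k => odd k) s)).
  apply/allP => x /mapP [k]; rewrite mem_filter => /andP [ok ks] ->.
  by have := allP as0 k ks; rewrite /ipred ok.
move=> i is0; case oi: (odd i).
  have := hi2 _ (fun j => c j.*2.+1) U2 A2'; rewrite -E2 h2 => /(_ erefl i./2).
  have -> : (i./2).*2.+1 = i by lia.
  apply; apply/mapP; exists i => //; rewrite mem_filter oi //.
have := hi1 _ (fun j => c j.*2) U1 A1'; rewrite -E1 h1 => /(_ erefl i./2).
have -> : (i./2).*2 = i by lia.
apply; apply/mapP; exists i => //; rewrite mem_filter oi //.
Qed.
End LB.


Section KB.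
Variable K : fieldType.

Definition kco (nu : cnum) : Kbow K nu -> nat -> K :=
  match nu as nu0 return Kbow K nu0 -> nat -> K with
  | Fin n => fun (v : 'rV[K]_n) i => if @insub _ (fun i => i < n)%N 'I_n i is Some j then v ord0 j else 0
  | Aleph0 => fun (p : {poly K}) i => p`_i
  end.
Definition kbd (nu : cnum) : Kbow K nu -> nat :=
  match nu as nu0 return Kbow K nu0 -> nat with
  | Fin n => fun _ => n
  | Aleph0 => fun (p : {poly K}) => size p
  end.

Lemma kco_lin nu k (x y : Kbow K nu) i : kco (k *: x + y) i = k * kco x i + kco y i.
Proof.
case: nu x y => [n|] x y /=; last by rewrite coefD coefZ.
by case: insub => [j|]; rewrite ?mxE ?mulr0 ?addr0.
Qed.

Lemma kco_bd nu (x : Kbow K nu) i : (kbd x <= i)%N -> kco x i = 0.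
Proof.
case: nu x => [n|] x /= hi; last exact: nth_default.
by rewrite insubF // ltnNge hi.
Qed.

Lemma kbd_idx nu (x : Kbow K nu) i : (i < kbd x)%N -> in_idx nu i.
Proof. by case: nu x. Qed.

Lemma kco_eq0 nu (x : Kbow K nu) :
  (forall i, (i < kbd x)%N -> kco x i = 0) -> x = 0.
Proof.
case: nu x => [n|] x /= h.
  apply/rowP => j; rewrite mxE; have := h j (ltn_ord j).
  rewrite (insubT (fun i => i < n)%N (ltn_ord j)) /= (_ : Sub _ _ = j) //; exact: val_inj.
apply/polyP => i; rewrite coef0; case: (ltnP i (size x)) => hi; first exact: h.
exact: nth_default.
Qed.

Lemma kco_ex nu (s : seq nat) (c : nat -> K) : all (in_idx nu) s ->
  exists x : Kbow K nu, forall i, kco x i = if i \in s then c i else 0.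
Proof.
case: nu => [n|] /= hs.
  exists (\row_(j < n) (if val j \in s then c j else 0)) => i.
  case: insubP => [j _ <-|]; first by rewrite mxE.
  move=> hin; case E: (i \in s) => //; by move: (allP hs i E); rewrite /= (negbTE hin).
exists (\poly_(i < (\max_(j <- s) j).+1) (if i \in s then c i else 0)) => i.
rewrite coef_poly; case: ltnP => // hi.
case E: (i \in s) => //.
exfalso; have := @leq_bigmax_seq _ s xpredT (fun j => j) i E erefl; move=> h2; have := leq_ltn_trans h2 hi; by rewrite ltnn.
Qed.

Lemma Kweight_lin nu : linw (@Kweight K nu).
Proof.
case: nu => [n|] k x y /=.
  rewrite mulr_sumr -big_split /=; apply: eq_bigr => j _; rewrite !mxE //.
have E : forall p : {poly K}, \sum_(i < size p) p`_i = p.[1].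
  by move=> p; rewrite horner_coef; apply: eq_bigr => i _; rewrite expr1n mulr1.
by rewrite !E hornerD hornerZ.
Qed.

Lemma Kweight_nz n : exists u : Kbow K (Fin n.+1), Kweight u != 0.
Proof.
exists (\row_(j < n.+1) (if val j == 0%N then 1 else 0)) => /=.
rewrite big_ord_recl big1 ?addr0; first by rewrite mxE /= oner_neq0.
by move=> j _; rewrite mxE.
Qed.

Lemma Kweight_nz0 : exists u : Kbow K Aleph0, Kweight u != 0.
Proof. by exists 1 => /=; rewrite size_poly1 big_ord1 coefC /= oner_neq0. Qed.

Lemma Kbow0 (x : Kbow K (Fin 0)) : x = 0.
Proof. by apply/rowP => -[]. Qed.

End KB.


Section LP.
Variable K : fieldType.

Definition phiK nu (A : lmodType K) (e : nat -> A) (h : nat -> nat) (x : Kbow K nu) : A :=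
  \sum_(i <- iota 0 (kbd x)) kco x i *: e (h i).

Lemma phiK_M nu (A : lmodType K) (e : nat -> A) h (x : Kbow K nu) M :
  (kbd x <= M)%N -> phiK e h x = \sum_(i <- iota 0 M) kco x i *: e (h i).
Proof.
move=> hM; rewrite /phiK -(subnKC hM) iotaD big_cat /= add0n.
rewrite [X in _ = _ + X]big_seq [X in _ = _ + X]big1 ?addr0 // => i; rewrite mem_iota => /andP [hi _].
by rewrite kco_bd // scale0r.
Qed.

Lemma Lprime nu (A : lmodType K) (e : nat -> A) Q (h g : nat -> nat) :
  lbasis e Q ->
  (forall i, in_idx nu i -> Q (h i) /\ g (h i) = i) ->
  (forall j, Q j -> in_idx nu (g j) /\ h (g j) = j) ->
  exists phi : Kbow K nu -> A,
    [/\ linf phi, injective phi & forall a, exists x, phi x = a].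
Proof.
move=> [hs hi] hh hg.
have lin : linf (@phiK nu A e h).
  move=> k x y.
  set M := maxn (kbd (k *: x + y)) (maxn (kbd x) (kbd y)).
  rewrite !(@phiK_M _ _ _ _ _ M); try (rewrite /M; lia).
  rewrite scaler_sumr -big_split /=; apply: eq_bigr => i _.
  by rewrite kco_lin scalerDl scalerA.
exists (phiK e h); split => //.
  move=> x y hxy; apply/eqP; rewrite -subr_eq0; apply/eqP.
  have h0 : phiK e h (x - y) = 0 by rewrite linfB // hxy subrr.
  apply: kco_eq0 => i hid.
  set z := x - y in h0 hid *.
  have I := iota_uniq 0 (kbd z).
  have P : forall i, i \in iota 0 (kbd z) -> in_idx nu i.
    by move=> j; rewrite mem_iota add0n => /andP [_ /kbd_idx].
  have U : uniq (map h (iota 0 (kbd z))).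
    rewrite map_inj_in_uniq // => a b /P pa /P pb hab.
    by rewrite -(hh a pa).2 -(hh b pb).2 hab.
  have AQ : all Q (map h (iota 0 (kbd z))).
    by apply/allP => j /mapP [a /P pa ->]; exact: (hh a pa).1.
  have := hi _ (fun j => kco z (g j)) U AQ.
  rewrite big_map (eq_big_seq (fun i => kco z i *: e (h i))); last first.
    by move=> a /P pa; rewrite (hh a pa).2.
  move=> /(_ h0 (h i)); rewrite (hh i (kbd_idx hid)).2; apply.
  by apply/mapP; exists i => //; rewrite mem_iota.
- move=> a; have [s [c [us as0 ->]]] := hs a.
  have AP : all (in_idx nu) (map g s).
    by apply/allP => j /mapP [b /(allP as0) qb ->]; exact: (hg b qb).1.
  have [x hx] := kco_ex (fun i => c (h i)) AP.
  exists x.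
  have Us : uniq (map g s).
    rewrite map_inj_in_uniq // => b1 b2 /(allP as0) q1 /(allP as0) q2 hb.
    by rewrite -(hg b1 q1).2 -(hg b2 q2).2 hb.
  set M := maxn (kbd x) (\max_(j <- map g s) j).+1.
  rewrite (@phiK_M _ _ _ _ _ M) ?leq_maxl //.
  rewrite (eq_bigr (fun i => if i \in map g s then c (h i) *: e (h i) else 0)); last first.
    by move=> i _; rewrite hx; case: (i \in map g s); rewrite ?scale0r.
  rewrite sum_iota_mem //; last first.
    move=> i hin; rewrite /M leq_max; apply/orP; right.
    by rewrite ltnS (@leq_bigmax_seq _ (map g s) xpredT (fun j => j) i hin).
  rewrite big_map; apply: eq_big_seq => b /(allP as0) qb.
  by rewrite (hg b qb).2.
Qed.

End LP.


Section C2.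
Variable K : fieldType.

Lemma exists_u nu (lam : Kbow K nu -> K) (x0 : Kbow K nu) :
  linw lam -> lam x0 != 0 -> exists u : Kbow K nu, Kweight u != 0.
Proof.
case: nu lam x0 => [[|n]|] lam x0 hl hx.
- by move: hx; rewrite (Kbow0 x0) (linw0 hl) eqxx.
- exact: Kweight_nz.
- exact: Kweight_nz0.
Qed.

Lemma exists_d (V : lmodType K) (s lam : V -> K) u x0 :
  linw s -> linw lam -> s u != 0 -> lam x0 != 0 ->
  exists d, s d != 0 /\ lam d != 0.
Proof.
move=> hs hl su lx.
case: (eqVneq (s x0) 0) => sx; last by exists x0.
case: (eqVneq (lam u) 0) => lu; last by exists u.
exists (u + x0); rewrite !linwD // sx lu addr0 add0r; split => //.
Qed.

Lemma core2 nu (A : lmodType K) (mul : A -> A -> A) (w : A -> K)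
  (phi : Kbow K nu -> A) :
  linf phi -> injective phi -> (forall a, exists x, phi x = a) -> linw w ->
  (exists a, w a != 0) -> (forall a b, mul a b = w b *: a) ->
  baric_iso mul w (@Kmul K nu) (@Kweight K nu).
Proof.
move=> lphi iphi sphi lw [a0 wa0] hmul.
set s := @Kweight K nu.
have ls : linw s by exact: Kweight_lin.
set lam := fun x => w (phi x).
have ll : linw lam.
  by move=> k x y; rewrite /lam lphi lw.
have [x0 hx0] := sphi a0.
have lx0 : lam x0 != 0 by rewrite /lam hx0.
have [u su] := exists_u ll lx0.
have [d [sd ld]] := exists_d ls ll su lx0.
pose psi y := y + ((s y - lam y) / lam d) *: d.
pose psi' y := y - ((s y - lam y) / s d) *: d.
have key : forall y, lam (psi y) = s y.
  move=> y; rewrite /psi linwD // linwZ // divfK //.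
  by rewrite addrC subrK.
have spsi : forall y, s (psi y) = s y + (s y - lam y) / lam d * s d.
  by move=> y; rewrite /psi linwD // linwZ.
have c1 : cancel psi psi'.
  move=> y; rewrite /psi' key spsi [s y + _]addrC addrK mulfK //.
  by rewrite /psi addrK.
have c2 : cancel psi' psi.
  move=> y; rewrite /psi.
  have -> : s (psi' y) = lam y.
    by rewrite /psi' -scaleNr linwD // linwZ // mulNr divfK // opprB addrC subrK.
  have -> : lam (psi' y) = lam y - (s y - lam y) / s d * lam d.
    by rewrite /psi' -scaleNr linwD // linwZ // mulNr.
  rewrite opprB addrCA subrr addr0 mulfK //.
  by rewrite /psi' subrK.
have sphi' : forall a, exists x, phi x == a.
  by move=> a; have [x hx] := sphi a; exists x; apply/eqP.
pose phinv a := xchoose (sphi' a).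
have cph1 : cancel phinv phi by move=> a; apply/eqP; exact: (xchooseP (sphi' a)).
have cph2 : cancel phi phinv by move=> x; apply: iphi; rewrite cph1.
pose g x := phi (psi x).
pose f a := psi' (phinv a).
have cfg : cancel f g by move=> a; rewrite /g /f c2 cph1.
have cgf : cancel g f by move=> x; rewrite /g /f cph2 c1.
have wg : forall x, w (g x) = s x by move=> x; exact: key.
have lpsi : linf psi.
  move=> k x y; rewrite /psi !linwD // !linwZ //.
  have -> : (k * s x + s y - (k * lam x + lam y)) / lam d =
            k * ((s x - lam x) / lam d) + (s y - lam y) / lam d.
    by rewrite mulrA -mulrDl; congr (_ / _); rewrite mulrBr opprD addrACA.
  by rewrite scalerDl scalerDr scalerA addrACA.
have lg : linf g by move=> k x y; rewrite /g lpsi lphi.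
have ig : injective g by exact: can_inj cgf.
exists f; split.
- by exists g.
- by move=> k a b; apply: ig; rewrite lg !cfg.
- move=> a b; apply: ig; rewrite /Kmul cfg linfZ // cfg hmul.
  by rewrite -{1}(cfg b) wg.
- by move=> a; rewrite -{2}(cfg a) wg.
Qed.
End C2.


Lemma hg_cadd nu1 nu2 : exists h g : nat -> nat,
  (forall i, in_idx (cadd nu1 nu2) i ->
     ipred (in_idx nu1) (in_idx nu2) (h i) /\ g (h i) = i) /\
  (forall j, ipred (in_idx nu1) (in_idx nu2) j ->
     in_idx (cadd nu1 nu2) (g j) /\ h (g j) = j).
Proof.
case: nu1 => [m|]; case: nu2 => [n|].
- exists (fun i => if (i < m)%N then i.*2 else (i - m).*2.+1).
  exists (fun j => if odd j then (m + j./2)%N else j./2); rewrite /ipred /=; split.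
    move=> i hi; case: (ltnP i m) => him.
      by rewrite oddD2 doubleK him.
    by rewrite oddD21 halfD21; split; lia.
  move=> j; case oj: (odd j) => hj.
    have -> : (m + j./2 < m)%N = false by lia.
    split; lia.
  by rewrite hj; split; lia.
- exists (fun i => if (i < m)%N then i.*2 else (i - m).*2.+1).
  exists (fun j => if odd j then (m + j./2)%N else j./2); rewrite /ipred /=; split.
    move=> i hi; case: (ltnP i m) => him.
      by rewrite oddD2 doubleK him.
    by rewrite oddD21 halfD21; split; lia.
  move=> j; case oj: (odd j) => hj.
    have -> : (m + j./2 < m)%N = false by lia.
    split; lia.
  by rewrite hj; split; lia.
- exists (fun i => if (i < n)%N then i.*2.+1 else (i - n).*2).
  exists (fun j => if odd j then j./2 else (n + j./2)%N); rewrite /ipred /=; split.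
    move=> i hi; case: (ltnP i n) => hin.
      by rewrite oddD21 halfD21 hin.
    by rewrite oddD2 doubleK; split; lia.
  move=> j; case oj: (odd j) => hj.
    by rewrite hj; split; lia.
  have -> : (n + j./2 < n)%N = false by lia.
  split; lia.
- exists id, id; rewrite /ipred /=; split => i; first by case: (odd i).
  by case: (odd i).
Qed.


Section Main.
Variable K : fieldType.

Lemma form_of_iso nu (A : lmodType K) (mul : A -> A -> A) (w : A -> K) :
  baric_iso mul w (@Kmul K nu) (@Kweight K nu) -> forall a b, mul a b = w b *: a.
Proof.
case=> f [[g c1 c2] lf mf wf] a b; apply: (can_inj c1).
by rewrite mf /Kmul wf linfZ.
Qed.

Lemma dim_phi (A : lmodType K) nu : has_dim A nu ->
  exists phi : Kbow K nu -> A,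
    [/\ linf phi, injective phi & forall a, exists x, phi x = a].
Proof.
move=> /has_dim_lbasis [e he]; apply: (Lprime (h := id) (g := id) he) => //.
Qed.

Lemma one_w (A : lmodType K) (mul : A -> A -> A) w : is_weight mul w ->
  exists y, w y = 1.
Proof.
case=> lw _ [a wa]; exists ((w a)^-1 *: a); rewrite linwZ // mulVf //.
Qed.

Lemma bow_form (A1 A2 : lmodType K) (mul1 : A1 -> A1 -> A1) w1
  (mul2 : A2 -> A2 -> A2) w2 :
  (forall a b, mul1 a b = w1 b *: a) -> (forall a b, mul2 a b = w2 b *: a) ->
  forall x y, bow_mul mul1 w1 mul2 w2 x y = bow_weight w1 w2 y *: x.
Proof.
move=> f1 f2 x y; rewrite [RHS]surjective_pairing scale_fst scale_snd.
rewrite /bow_mul /bow_weight f1 f2 !scalerDl; congr (_, _); exact: addrC.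
Qed.

Lemma bow_lin (A1 A2 : lmodType K) (w1 : A1 -> K) (w2 : A2 -> K) :
  linw w1 -> linw w2 -> linw (bow_weight w1 w2).
Proof.
move=> l1 l2 k x y; rewrite /bow_weight add_fst add_snd scale_fst scale_snd.
by rewrite l1 l2 mulrDr addrACA.
Qed.

End Main.

Unset Implicit Arguments.
Theorem corollary6p1 (K : fieldType) (hK : [pchar K] =i pred0)
    (A1 A2 : lmodType K)
    (mul1 : A1 -> A1 -> A1) (w1 : A1 -> K)
    (mul2 : A2 -> A2 -> A2) (w2 : A2 -> K)
    (hm1 : bilinear_mul mul1) (hw1 : is_weight mul1 w1)
    (hm2 : bilinear_mul mul2) (hw2 : is_weight mul2 w2)
    (nu1 nu2 : cnum) (hd1 : has_dim A1 nu1) (hd2 : has_dim A2 nu2) :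
  (associative_mul (bow_mul mul1 w1 mul2 w2) <->
     baric_iso mul1 w1 (@Kmul K nu1) (@Kweight K nu1) /\
     baric_iso mul2 w2 (@Kmul K nu2) (@Kweight K nu2)) /\
  (associative_mul (bow_mul mul1 w1 mul2 w2) ->
     baric_iso (bow_mul mul1 w1 mul2 w2) (bow_weight w1 w2)
               (@Kmul K (cadd nu1 nu2)) (@Kweight K (cadd nu1 nu2))).
Proof.
have hw1' := hw1; have hw2' := hw2.
case: hw1 => lw1 mw1 [a1 wa1]; case: hw2 => lw2 mw2 [a2 wa2].
have [y1 wy1] := one_w hw1'; have [y2 wy2] := one_w hw2'.
have forms : associative_mul (bow_mul mul1 w1 mul2 w2) ->
    (forall a b, mul1 a b = w1 b *: a) /\ (forall a b, mul2 a b = w2 b *: a).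
  move=> hA; split => x z.
    have := congr1 fst (hA (x, 0) (0, y2) (z, 0)); rewrite /bow_mul /=.
    rewrite !(mul0_l _ hm1, mul0_r _ hm1, mul0_l _ hm2, mul0_r _ hm2).
    rewrite !(linw0 lw1, linw0 lw2, scaler0, scale0r, addr0, add0r).
    by rewrite wy2 scale1r (mul0_r _ hm1) add0r linwZ // wy2 mulr1.
  have := congr1 snd (hA (0, x) (y1, 0) (0, z)); rewrite /bow_mul /=.
  rewrite !(mul0_l _ hm1, mul0_r _ hm1, mul0_l _ hm2, mul0_r _ hm2).
  rewrite !(linw0 lw1, linw0 lw2, scaler0, scale0r, addr0, add0r).
  rewrite wy1 scale1r (mul0_r _ hm2) add0r linwZ // wy1 mulr1. by [].
have [phi1 [lp1 ip1 sp1]] := dim_phi hd1.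
have [phi2 [lp2 ip2 sp2]] := dim_phi hd2.
split; first split.
- move=> /forms [f1 f2]; split.
    exact: (core2 lp1 ip1 sp1 lw1 (ex_intro _ a1 wa1) f1).
  exact: (core2 lp2 ip2 sp2 lw2 (ex_intro _ a2 wa2) f2).
- case=> /form_of_iso f1 /form_of_iso f2 x y z.
  rewrite !(bow_form f1 f2) (linwZ _ _ (bow_lin lw1 lw2)); exact: scalerA.
- move=> /forms [f1 f2].
  have [e1 he1] := has_dim_lbasis hd1.
  have [e2 he2] := has_dim_lbasis hd2.
  have hp := lbasis_prod he1 he2.
  have [h [g [hh hg]]] := hg_cadd nu1 nu2.
  have [phi [lp ip sp]] := Lprime hp hh hg.
  apply: (core2 lp ip sp (bow_lin lw1 lw2)) => //.
    exists (a1, 0); rewrite /bow_weight /= linw0 // addr0 //.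
  exact: bow_form.
Qed.
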